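(* Assume $\Gamma^{orb}$ is a bamboo with nodes $n_1,\dots,n_k$ in order along it. Let $\alpha\in\mathbb R_{\ge0}\langle\mathfrak v_1,\dots,\mathfrak v_k\rangle\cap\mathbb Z\langle\pi_{\mathcal N}(E_v^* )\rangle_{v\in\mathcal V}$, let $\lambda_1,\lambda_k>0$, and let $$\varphi(\mathbf t_{\mathcal N})=\frac{\mathbf t_{\mathcal N}^{\alpha}}{(1-\mathbf t_{\mathcal N}^{\lambda_1\mathfrak v_1})(1-\mathbf t_{\mathcal N}^{\lambda_k\mathfrak v_k})}.$$ Let $\varphi=\varphi^++\varphi^{neg}$ be the unique decomposition where $\varphi^+$ is a finite sum of monomials with exponents $\beta\not<0$ and $\varphi^{neg}=R/((1-\mathbf t_{\mathcal N}^{\lambda_1\mathfrak v_1})(1-\mathbf t_{\mathcal N}^{\lambda_k\mathfrak v_k}))$ has negative degree in every $t_n$. Then every exponent $\beta$ of a monomial of $\varphi^+$ (with nonzero coefficient) satisfies $\mathfrak s(\beta)=1$.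
   Context: $\Gamma$ is a connected negative definite plumbing graph which is a tree with all genera $0$; $\mathcal V$ vertices, $\delta_v$ valencies, $\mathcal N=\{v:\delta_v\ge3\}$ the nodes. $L=\bigoplus\mathbb ZE_v$ with the intersection form, $E_v^*\in L\otimes\mathbb Q$ defined by $(E^*_v,E_w)=-\delta_{vw}$. $\pi_{\mathcal N}$ is the projection of $L\otimes\mathbb R$ onto $\bigoplus_{n\in\mathcal N}\mathbb R E_n$ forgetting non-node coordinates; $\mathfrak v_i:=\pi_{\mathcal N}(E^*_{n_i})=\sum_{\ell}-(E^*_{n_i},E^*_{n_\ell})E_{n_\ell}$, which has all coordinates positive. For $x=\sum_n x_nE_n$ put $\mathbf t_{\mathcal N}^x=\prod_n t_n^{x_n}$. $\beta<0$ means all coordinates negative; $\beta\not<0$ otherwise. A rational function $R/D$, $D=(1-\mathbf t_{\mathcal N}^{\lambda_1\mathfrak v_1})(1-\mathbf t_{\mathcal N}^{\lambda_k\mathfrak v_k})$, has negative degree in $t_n$ if each monomial of $R$ has $t_n$-exponent smaller than that of $\mathbf t_{\mathcal N}^{\lambda_1\mathfrak v_1+\lambda_k\mathfrak v_k}$. Orbifold graph $\Gamma^{orb}$: vertex set $\mathcal N$, $n,n'$ adjacent iff the path between them in $\Gamma$ has only valency-$2$ interior vertices; it is a bamboo if it has no vertex of valency $\ge3$. Multiplicity: choose $n_0\in\mathcal N$, orient the edges of $\Gamma^{orb}$ toward $n_0$, write $n>n'$ if an edge is oriented from $n$ to $n'$; $\mathfrak s_n(\beta)=1$ if $\beta_n\ge0$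 and $0$ otherwise; $\mathfrak s_{n>n'}(\beta)=1$ if $\beta_n\ge0$ and $\beta_{n'}<0$ and $0$ otherwise; $\mathfrak s(\beta)=\mathfrak s_{n_0}(\beta)+\sum_{n>n'}\mathfrak s_{n>n'}(\beta)$ (independent of $n_0$). *)

(* Defs.v *)
From HB Require Import structures.
From mathcomp Require Import all_boot all_order all_algebra.
Set Implicit Arguments. Unset Strict Implicit. Unset Printing Implicit Defensive.
Import Order.TTheory GRing.Theory Num.Theory.
Local Open Scope ring_scope.

(* Vertices of Gamma are 'I_m; adjacency is a relation e : rel 'I_m;
   Euler numbers (self-intersections) are b : 'I_m -> int; all genera are 0. *)

Definition valency (m : nat) (e : rel 'I_m) (v : 'I_m) : nat :=
  #|[pred w | e v w]|.

(* simple graph which is a tree: symmetric, irreflexive, connected,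
   with |edges| = |V| - 1 (each edge counted twice as ordered pair) *)
Definition is_tree (m : nat) (e : rel 'I_m) : Prop :=
  [/\ symmetric e, irreflexive e, (forall v w, connect e v w) &
      #|[pred p : 'I_m * 'I_m | e p.1 p.2]| = (2 * m.-1)%N].

Definition inter_mx (R : realFieldType) (m : nat) (e : rel 'I_m)
  (b : 'I_m -> int) : 'M[R]_m :=
  \matrix_(i, j) (if i == j then (b i)%:~R else if e i j then 1 else 0).

Definition neg_def (R : realFieldType) (m : nat) (M : 'M[R]_m) : Prop :=
  forall x : 'rV[R]_m, x != 0 -> (x *m M *m x^T) 0 0 < 0.

(* coordinates of E*_v: (E*_v, E_w) = - delta_{vw}, i.e. E*_v *m I = - e_v *)
Definition Estar (R : realFieldType) (m : nat) (e : rel 'I_m)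
  (b : 'I_m -> int) (v : 'I_m) : 'rV[R]_m :=
  - (delta_mx 0 v *m invmx (inter_mx R e b)).

Definition projN (R : realFieldType) (m k : nat) (node : 'I_k -> 'I_m)
  (x : 'rV[R]_m) : 'rV[R]_k := \row_i x 0 (node i).

Definition vfrak (R : realFieldType) (m k : nat) (e : rel 'I_m)
  (b : 'I_m -> int) (node : 'I_k -> 'I_m) (i : 'I_k) : 'rV[R]_k :=
  projN node (Estar R e b (node i)).

(* adjacency in the orbifold graph: the (unique) path in Gamma from n to n'
   has only valency-2 interior vertices *)
Definition orb_adj (m : nat) (e : rel 'I_m) (n n' : 'I_m) : Prop :=
  exists p : seq 'I_m,
    [&& path e n (rcons p n'), uniq (n :: rcons p n')
      & all (fun v => valency e v == 2%N) p].

(* a finite formal sum of monomials c * t^beta, beta in R^N *)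
Definition lpoly (R : realFieldType) (k : nat) := seq (int * 'rV[R]_k).

Definition lcoef (R : realFieldType) (k : nat) (p : lpoly R k)
  (beta : 'rV[R]_k) : int :=
  \sum_(a <- p | a.2 == beta) a.1.

Definition lmul (R : realFieldType) (k : nat) (p q : lpoly R k) : lpoly R k :=
  [seq (a.1 * c.1, a.2 + c.2) | a <- p, c <- q].

Definition lmono (R : realFieldType) (k : nat) (x : 'rV[R]_k) : lpoly R k :=
  [:: (1, x)].

Definition lden (R : realFieldType) (k : nat) (u w : 'rV[R]_k) : lpoly R k :=
  lmul [:: (1, 0); (-1, u)] [:: (1, 0); (-1, w)].

Definition negv (R : realFieldType) (k : nat) (beta : 'rV[R]_k) : bool :=
  [forall i, beta 0 i < 0].

(* phi = t^alpha / D decomposes as phip + Rp / D, where phip has only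
   exponents beta not< 0 and Rp has negative degree in every t_n, i.e.
   every monomial of Rp has t_n-exponent < that of t^{u+w}.
   The identity of rational functions is stated after clearing D. *)
Definition is_decomp (R : realFieldType) (k : nat) (alpha u w : 'rV[R]_k)
  (phip Rp : lpoly R k) : Prop :=
  [/\ (forall beta, lcoef phip beta != 0 -> ~~ negv beta),
      (forall beta, lcoef Rp beta != 0 -> forall i, beta 0 i < (u + w) 0 i) &
      (forall beta, lcoef (lmono alpha) beta
                    = lcoef (lmul phip (lden u w) ++ Rp) beta)].

(* nodes indexed 0..k; edges {i, i+1}; root j; edges oriented toward j. *)
Definition scoord (R : realFieldType) (k : nat) (beta : 'rV[R]_k.+1) (i : nat) : R :=
  beta 0 (inord i).

Definition smult (R : realFieldType) (k : nat) (beta : 'rV[R]_k.+1)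
  (j : 'I_k.+1) : nat :=
  addn (nat_of_bool (0 <= beta 0 j)%R)
  (\sum_(i < k)
     (if (i.+1 <= j)%N
      then nat_of_bool ((0 <= scoord beta i)%R && (scoord beta i.+1 < 0)%R)
      else nat_of_bool ((0 <= scoord beta i.+1)%R && (scoord beta i < 0)%R))).

(* Main.v *)
Require Import Defs.
From HB Require Import structures.
From mathcomp Require Import all_boot all_order all_algebra.
From mathcomp Require Import zify ring lra.
Set Implicit Arguments. Unset Strict Implicit. Unset Printing Implicit Defensive.
Import Order.TTheory GRing.Theory Num.Theory.

Lemma sum_ind_eq (k q : nat) (bb : bool) :
  \sum_(i < k) ((i == q :> nat) && bb : nat) = ((q < k) && bb : nat).
Proof.
elim: k => [|k IH]; first by rewrite big_ord0 ltn0.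
rewrite big_ord_recr /= IH.
case: bb IH => IH; rewrite ?andbF ?addn0 //= !andbT.
case: (ltngtP q k) => [h|h|->]; rewrite ?eqxx ?ltnS.
- by rewrite (ltnW h).
- by rewrite leqNgt h.
- by rewrite leqnn.
Qed.

Lemma sum_ind_eqS (k p : nat) (bb : bool) :
  \sum_(i < k) ((i.+1 == p) && bb : nat) = ((0 < p <= k) && bb : nat).
Proof.
case: p => [|p].
  by rewrite big1 // => i _.
have -> : \sum_(i < k) ((i.+1 == p.+1) && bb : nat) = \sum_(i < k) ((i == p :> nat) && bb : nat).
  by apply: eq_bigr => i _; rewrite eqSS.
by rewrite sum_ind_eq.
Qed.

Ltac bsplit := repeat match goal with
  | |- context[?a <= ?b] => case: (leqP a b) => ?
  | |- context[?a == ?b :> nat] => case: (eqVneq a b) => ?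
  end; simpl; try lia.

Lemma smult_comb (k : nat) (f : nat -> bool) (j0 : nat) :
  j0 <= k -> (exists i, (i <= k) && f i) ->
  (forall i j l, i < j -> j < l -> l <= k -> f i -> f l -> f j) ->
  (f j0 + \sum_(i < k)
     (if i.+1 <= j0 then (f i && ~~ f i.+1 : nat)
      else (f i.+1 && ~~ f i : nat)))%N = 1%N.
Proof.
move=> hj0 hex hint.
have ub : forall i, (i <= k) && f i -> i <= k by move=> i /andP[].
case: (ex_minnP hex) => p /andP[pk fp] pmin.
case: (ex_maxnP hex ub) => q /andP[qk fq] qmax.
have pq : p <= q by apply: pmin; rewrite qk fq.
have fE : forall x, x <= k -> f x = (p <= x <= q).
  move=> x xk; apply/idP/idP.
    by move=> fx; rewrite pmin ?qmax // xk fx.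
  case/andP=> px xq.
  case: (ltngtP p x) => [h1|h1|<-] //; last by lia.
  case: (ltngtP x q) => [h2|h2|->] //; last by lia.
  exact: (hint p x q).
rewrite (eq_bigr (fun i : 'I_k => ((i == q :> nat) && (q < j0) : nat) + ((i.+1 == p) && (j0 < p) : nat)))%N.
  rewrite big_split /= sum_ind_eq sum_ind_eqS fE //.
  bsplit.
move=> i _.
have ik := ltn_ord i.
rewrite (fE i) ?(ltnW ik) // (fE i.+1) //.
move: (nat_of_ord i) ik => x xk.
bsplit.
Qed.

Local Open Scope ring_scope.

Section Alg.
Variables (R : realFieldType) (k : nat).
Implicit Types (p q : lpoly R k) (x y : 'rV[R]_k).

Lemma lcoef_cat p q x : lcoef (p ++ q) x = lcoef p x + lcoef q x.
Proof. by rewrite /lcoef big_cat. Qed.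

Lemma lcoef_mono a x : lcoef (lmono a) x = (x == a)%:R.
Proof.
rewrite /lcoef /lmono big_cons big_nil addr0.
by case: (x =P a) => [->|/eqP ne]; rewrite ?eqxx // eq_sym (negbTE ne).
Qed.

Lemma lcoef_mul p q x :
  lcoef (lmul p q) x = \sum_(c <- q) c.1 * lcoef p (x - c.2).
Proof.
rewrite /lcoef /lmul big_mkcond big_allpairs_dep /= exchange_big /=.
apply: eq_bigr => c _; rewrite big_distrr /= [RHS]big_mkcond /=.
apply: eq_bigr => a _.
have -> : (a.2 == x - c.2) = (a.2 + c.2 == x) by rewrite eq_sym subr_eq eq_sym.
by case: ifP; rewrite ?mulr0 // mulrC.
Qed.

Lemma lcoef_D p u w x :
  lcoef (lmul p (lden u w)) x =
  lcoef p x - lcoef p (x - w) - lcoef p (x - u) + lcoef p (x - (u + w)).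
Proof.
rewrite lcoef_mul /lden /lmul /= !big_cons big_nil /= !subr0 !add0r addr0.
rewrite subr0; ring.
Qed.

Definition ell x : R := \sum_i x 0 i.

Lemma ellD x y : ell (x + y) = ell x + ell y.
Proof. by rewrite /ell -big_split; apply: eq_bigr => i _; rewrite mxE. Qed.

Lemma lcoef_has p x : lcoef p x != 0 -> has (fun c => c.2 == x) p.
Proof. by apply: contraR => h; rewrite /lcoef big_hasC. Qed.

Lemma count_lt (T : Type) (a1 a2 : pred T) (s : seq T) :
  subpred a1 a2 -> has (fun z => a2 z && ~~ a1 z) s -> (count a1 s < count a2 s)%N.
Proof.
move=> sub; elim: s => [//|z s IH] /=.
case/orP=> [/andP[h2 h1]|h].
  by have := sub_count sub s; rewrite (negbTE h1) h2 /=; lia.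
have h12 : (a1 z <= a2 z)%N by case: (boolP (a1 z)) => [/sub ->|].
by have := IH h; lia.
Qed.

Lemma phip_good (alpha u w : 'rV[R]_k) phip Rp :
  0 < ell u -> 0 < ell w -> is_decomp alpha u w phip Rp ->
  forall g, lcoef phip g != 0 ->
  exists a b : nat, g = alpha - a.+1%:R *: u - b.+1%:R *: w.
Proof.
move=> lu lw [Hneg Hrp Hid].
pose N g := count (fun c : int * 'rV[R]_k => ell g < ell c.2) phip.
have Nlt : forall g g', ell g < ell g' -> lcoef phip g' != 0 -> (N g' < N g)%N.
  move=> g g' lt /lcoef_has hh; apply: count_lt.
    by move=> c /= h; apply: lt_trans h.
  apply: sub_has hh => c /eqP ->; by rewrite lt /= ltxx.
suff: forall n g, (N g < n)%N -> lcoef phip g != 0 ->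
  exists a b : nat, g = alpha - a.+1%:R *: u - b.+1%:R *: w.
  by move=> H g; apply: (H (N g).+1).
elim=> [//|n IH] g Ng Pg.
set x := g + u + w.
have ex : x - w = g + u by apply/matrixP => i j; rewrite !mxE; ring.
have eu : x - u = g + w by apply/matrixP => i j; rewrite !mxE; ring.
have euw : x - (u + w) = g by apply/matrixP => i j; rewrite !mxE; ring.
have lgu : ell g < ell (g + u) by rewrite ellD ltrDl.
have lgw : ell g < ell (g + w) by rewrite ellD ltrDl.
have lgx : ell g < ell x by rewrite /x !ellD -addrA ltrDl addr_gt0.
have IH' : forall g', ell g < ell g' -> lcoef phip g' != 0 ->
  exists a b : nat, g' = alpha - a.+1%:R *: u - b.+1%:R *: w.
  move=> g' lt Pg'; apply: IH => //.
  by apply: leq_trans (Nlt _ _ lt Pg') _; rewrite -ltnS.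
have sub1 : g = x - u - w by apply/matrixP => i j; rewrite !mxE; ring.
case: (eqVneq (lcoef phip x) 0) => [P1|/(IH' _ lgx) [a [b eab]]]; last first.
  exists a.+1, b.+1; rewrite sub1 eab.
  by apply/matrixP => i j; rewrite !mxE !mulrS; ring.
case: (eqVneq (lcoef phip (g + u)) 0) => [P2|/(IH' _ lgu) [a [b eab]]]; last first.
  exists a.+1, b; rewrite -[g](addrK u) eab.
  by apply/matrixP => i j; rewrite !mxE !mulrS; ring.
case: (eqVneq (lcoef phip (g + w)) 0) => [P3|/(IH' _ lgw) [a [b eab]]]; last first.
  exists a, b.+1; rewrite -[g](addrK w) eab.
  by apply/matrixP => i j; rewrite !mxE !mulrS; ring.
case: (eqVneq x alpha) => [xa|xna].
  exists 0%N, 0%N; rewrite sub1 xa.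
  by apply/matrixP => i j; rewrite !mxE; ring.
have := Hid x; rewrite lcoef_mono (negbTE xna) lcoef_cat lcoef_D ex eu euw P1 P2 P3.
rewrite !subr0 add0r => /eqP; rewrite eq_sym addr_eq0 => /eqP hR.
have : lcoef Rp x != 0 by move: (Pg); rewrite hR oppr_eq0.
move=> /Hrp hlt; have := Hneg _ Pg; rewrite /negv.
case/forallP => i; have := hlt i; rewrite /x !mxE.
by move=> h; rewrite -(ltrD2r ((u + w) 0 i)) add0r mxE addrA.
Qed.
End Alg.
Local Open Scope ring_scope.

Section LinAlg.
Variables (R : realFieldType) (m : nat) (e : rel 'I_m) (b : 'I_m -> int).
Notation M := (inter_mx R e b).

Lemma unit_inter : neg_def M -> M \in unitmx.
Proof.
move=> nd; rewrite unitmxE unitfE; apply/negP => /det0P [v vnz vM].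
by have := nd v vnz; rewrite vM mul0mx mxE ltxx.
Qed.

Lemma Estar_mul v : neg_def M -> Estar R e b v *m M = - delta_mx 0 v.
Proof.
by move=> nd; rewrite /Estar mulNmx -mulmxA mulVmx ?unit_inter // mulmx1.
Qed.

Lemma negset (X : 'rV[R]_m) (C : {set 'I_m}) :
  neg_def M ->
  (forall v, v \in C -> X 0 v < 0) ->
  (forall v, v \in C -> (X *m M) 0 v <= 0) ->
  (forall v w, w \in C -> v \notin C -> e v w -> 0 <= X 0 v) ->
  C = set0.
Proof.
move=> nd Xneg XMneg bnd; apply/eqP; apply: contraT => /set0Pn [v0 v0C].
pose Y : 'rV[R]_m := \row_v (if v \in C then X 0 v else 0).
have Ynz : Y != 0.
  apply/eqP => /matrixP /(_ 0 v0); rewrite !mxE v0C => h.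
  by have := Xneg _ v0C; rewrite h ltxx.
have := nd _ Ynz; rewrite ltNge => /negP H; exfalso; apply: H.
rewrite mxE; apply: sumr_ge0 => w _; rewrite !mxE.
case: (boolP (w \in C)) => wC; last by rewrite mulr0.
apply: mulr_le0; last exact: ltW (Xneg _ wC).
apply: le_trans (XMneg _ wC); rewrite !mxE; apply: ler_sum => v _.
rewrite !mxE; case: (boolP (v \in C)) => vC //.
have vw : (v == w) = false.
  by apply/negP => /eqP evw; move: vC; rewrite evw wC.
rewrite mul0r vw /=; case: ifP => evw; last by rewrite mulr0.
by rewrite mulr1; exact: (bnd v w wC vC evw).
Qed.
End LinAlg.
Section Pos.
Variables (R : realFieldType) (m : nat) (e : rel 'I_m) (b : 'I_m -> int).
Notation M := (inter_mx R e b).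

Lemma Estar_nonneg v w : neg_def M -> 0 <= Estar R e b v 0 w.
Proof.
move=> nd; set X := Estar R e b v.
have H := @negset R m e b X [set w | X 0 w < 0] nd.
have : w \notin [set w | X 0 w < 0].
  rewrite H ?inE //.
  - by move=> z; rewrite inE.
  - move=> z _; rewrite Estar_mul // !mxE oppr_le0; by case: (_ && _).
  - by move=> z z' _; rewrite inE -leNgt.
by rewrite inE -leNgt.
Qed.

Lemma Estar_diag v : neg_def M -> 0 < Estar R e b v 0 v.
Proof.
move=> nd; set X := Estar R e b v.
have Xnz : X != 0.
  apply/eqP => X0; have := Estar_mul v nd; rewrite -/X X0 mul0mx.
  move/matrixP/(_ 0 v); rewrite !mxE !eqxx /= => /eqP.
  by rewrite eq_sym oppr_eq0 oner_eq0.
have := nd _ Xnz; rewrite Estar_mul // mulNmx -rowE !mxE oppr_lt0.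
done.
Qed.
End Pos.
Lemma val2 (m : nat) (e : rel 'I_m) : symmetric e ->
  forall x s, path e x s -> uniq (x :: s) ->
  forall v, v \in s -> v != last x s -> (2 <= valency e v)%N.
Proof.
move=> esym x s; elim: s x => [//|y s IH] x /= /andP[exy ps] /andP[xns us] v.
rewrite inE; case/orP => [/eqP ->|vs] vl; last exact: (IH y ps us v vs vl).
case: s ps us xns vl {IH} => [|z s] /=; first by rewrite eqxx.
case/andP=> eyz _ _; rewrite !inE negb_or => /andP[_ /norP [xz _]] _.
rewrite /valency; apply: leq_trans (subset_leq_card (_ : [set x; z] \subset _)).
  by rewrite cards2 xz.
apply/subsetP => w; rewrite !inE => /orP[/eqP->|/eqP->] //.
by rewrite esym.
Qed.

Section IVT.
Variables (m k : nat) (e : rel 'I_m) (node : 'I_k.+1 -> 'I_m).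
Hypothesis esym : symmetric e.
Hypothesis ninj : injective node.
Hypothesis nodeP : forall v, (3 <= valency e v)%N <-> exists i, node i = v.
Hypothesis orbP : forall i j : 'I_k.+1, orb_adj e (node i) (node j) <->
   (i.+1 == j :> nat) || (j.+1 == i :> nat).

Definition isnode (v : 'I_m) : bool := [exists i, node i == v].

Lemma ivt n : forall (p : seq 'I_m) (a c i : 'I_k.+1), (size p < n)%N ->
  path e (node a) p -> uniq (node a :: p) -> last (node a) p = node c ->
  node i \notin (node a :: p) -> (i < a)%N = (i < c)%N.
Proof.
elim: n => [//|n IH] p a c i.
case: p => [|y0 p0].
  by move=> _ _ _ /= /ninj ->.
set p := y0 :: p0 => sp pp up lp nip.
have hp : has isnode p.
  apply/hasP; exists (node c); first by rewrite -lp /p /= mem_last.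
  by apply/existsP; exists c.
move: sp pp up lp nip.
case: (split_find_nth (node a) hp) => y q r ny nq sp pp up lp nip.
case/existsP: ny => bb /eqP ey.
have pq : path e (node a) (rcons q y).
  by move: pp; rewrite cat_path => /andP[].
have uq : uniq (node a :: rcons q y).
  apply: subseq_uniq up; exact: (prefix_subseq (node a :: rcons q y) r).
have adj : orb_adj e (node a) (node bb).
  exists q; rewrite ey pq uq /=; apply/allP => v vq.
  have nv : ~~ isnode v by apply: contra nq => iv; apply/hasP; exists v.
  have v2 : (2 <= valency e v)%N.
    apply: (val2 esym pq uq); first by rewrite mem_rcons inE vq orbT.
    rewrite last_rcons; apply: contra nv => /eqP ->; by apply/existsP; exists bb; rewrite ey.
  have v3 : ~ (3 <= valency e v)%N.
    move=> /nodeP [j hj]; move: nv; rewrite /isnode; case/existsP; by exists j; rewrite hj.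
  apply/eqP; lia.
have hab := (proj1 (orbP a bb) adj).
have pr : path e y r.
  by move: pp; rewrite cat_path last_rcons => /andP[_].
have ur : uniq (y :: r).
  by move: up; rewrite cat_rcons /= cat_uniq => /andP[_ /and3P[_ _ h]]; exact: h.
have lr : last (node bb) r = node c by rewrite ey; move: lp; rewrite last_cat last_rcons.
have nir : node i \notin node bb :: r.
  apply: contra nip; rewrite ey cat_rcons !inE mem_cat inE => /orP[->|->]; by rewrite !orbT.
have sr : (size r < n)%N by move: sp; rewrite size_cat size_rcons; lia.
have pr' : path e (node bb) r by rewrite ey.
have ur' : uniq (node bb :: r) by rewrite ey.
have := IH r bb c i sr pr' ur' lr nir.
have ia : (i != a :> nat).
  apply/negP => /eqP /val_inj ia; move: nip; by rewrite ia inE eqxx.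
have ib : (i != bb :> nat).
  apply/negP => /eqP /val_inj ib; move: nip; by rewrite ib ey cat_rcons !inE mem_cat inE eqxx !orbT.
move=> <-; case/orP: hab => /eqP hab; lia.
Qed.

Lemma pathQ (r : rel 'I_m) (Q : pred 'I_m) :
  (forall x y, r x y -> Q y) -> forall x p, path r x p -> all Q p.
Proof.
move=> hr x p; elim: p x => [//|y p IH] x /= /andP[rxy pp].
by rewrite (hr _ _ rxy) (IH _ pp).
Qed.

Lemma connQ (r : rel 'I_m) (Q : pred 'I_m) :
  (forall x y, r x y -> Q y) -> forall x y, connect r x y -> Q x -> Q y.
Proof.
move=> hr x y /connectP [p pp ->] Qx.
have : all Q (x :: p) by rewrite /= Qx (pathQ hr pp).
by move/allP; apply; rewrite mem_last.
Qed.

Lemma ivt_conn (Q : pred 'I_m) (a c i : 'I_k.+1) :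
  connect (fun x y => [&& e x y, Q x & Q y]) (node a) (node c) ->
  Q (node a) -> ~~ Q (node i) -> (i < a)%N = (i < c)%N.
Proof.
set r := fun x y => [&& e x y, Q x & Q y].
have hr : forall x y, r x y -> Q y by move=> x y /and3P[].
move=> /connectP [p pp lp] Qa nQi.
case: (shortenP pp) lp => p' pp' up' _ lp'.
have aQ : all Q p' := pathQ hr pp'.
apply: (@ivt (size p').+1 p' a c i) => //.
- by apply: sub_path pp' => x y /and3P[].
- rewrite inE negb_or; apply/andP; split.
    by apply: contra nQi => /eqP ->.
  by apply/negP => /(allP aQ); apply/negP.
Qed.
End IVT.
Lemma ellZ (R : realFieldType) (k : nat) (a : R) (x : 'rV[R]_k) : ell (a *: x) = a * ell x.
Proof. by rewrite /ell mulr_sumr; apply: eq_bigr => i _; rewrite mxE. Qed.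

Lemma sum_pick (R : realFieldType) (n : nat) (i0 : 'I_n) (f : 'I_n -> R) :
  \sum_i ((i == i0)%:R * f i) = f i0.
Proof.
rewrite (bigD1 i0) //= eqxx mul1r big1 ?addr0 // => i /negbTE ->; by rewrite mul0r.
Qed.

Lemma sumZE (R : realFieldType) (n p : nat) (V : 'I_n -> 'rV[R]_p) (f : 'I_n -> R) j :
  (\sum_i f i *: V i) 0 j = \sum_i f i * V i 0 j.
Proof. by rewrite summxE; apply: eq_bigr => i _; rewrite mxE. Qed.

Lemma subZE (R : realFieldType) (p : nat) (x y : 'rV[R]_p) (r : R) j :
  (x - r *: y) 0 j = x 0 j - r * y 0 j.
Proof. by rewrite mxE [in X in _ + X = _]mxE [in X in _ - X = _]mxE. Qed.

Lemma scaleE (R : realFieldType) (p : nat) (x : 'rV[R]_p) (r : R) j :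
  (r *: x) 0 j = r * x 0 j.
Proof. by rewrite mxE. Qed.

Unset Implicit Arguments.

Theorem mainTheorem4 (R : realFieldType) (m k : nat) (e : rel 'I_m)
  (b : 'I_m -> int) (node : 'I_k.+1 -> 'I_m) (l1 lk : R) (alpha : 'rV[R]_k.+1) :
  is_tree e ->
  neg_def (inter_mx R e b) ->
  (* node enumerates the nodes N injectively *)
  injective node ->
  (forall v, (3 <= valency e v)%N <-> exists i, node i = v) ->
  (* Gamma^orb is the bamboo n_1 - n_2 - ... - n_k *)
  (forall i j : 'I_k.+1, orb_adj e (node i) (node j) <-> (i.+1 == j :> nat) || (j.+1 == i :> nat)) ->
  (* alpha in R_{>=0}<v_1..v_k> *)
  (exists c : 'I_k.+1 -> R, (forall i, 0 <= c i) /\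
       alpha = \sum_i c i *: vfrak R e b node i) ->
  (* alpha in Z<pi_N(E*_v)>_v *)
  (exists z : 'I_m -> int, alpha = \sum_v (z v)%:~R *: projN node (Estar R e b v)) ->
  0 < l1 -> 0 < lk ->
  forall phip Rp : lpoly R k.+1,
    is_decomp alpha (l1 *: vfrak R e b node ord0) (lk *: vfrak R e b node ord_max) phip Rp ->
    forall beta, lcoef phip beta != 0 ->
      forall n0 : 'I_k.+1, smult beta n0 = 1%N.
Proof.
move=> [esym eirr econn ecard] nd ninj nodeP orbP [c [c0 alphaE]] _ l1p lkp phip Rp dec beta Pb n0.
have vfE : forall i j, vfrak R e b node i 0 j = Estar R e b (node i) 0 (node j).
  by move=> i j; rewrite /vfrak /projN mxE.
have ellv : forall i, 0 < ell (vfrak R e b node i).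
  move=> i; rewrite /ell (bigD1 i) //= vfE.
  have h1 := Estar_diag (node i) nd.
  have h2 : 0 <= \sum_(j | j != i) vfrak R e b node i 0 j.
    by apply: sumr_ge0 => j _; rewrite vfE Estar_nonneg.
  lra.
have lu : 0 < ell (l1 *: vfrak R e b node ord0) by rewrite ellZ mulr_gt0.
have lw : 0 < ell (lk *: vfrak R e b node ord_max) by rewrite ellZ mulr_gt0.
have [a [bb ebeta]] := phip_good lu lw dec Pb.
have nnegb : ~~ negv beta by case: dec => H _ _; apply: H.
pose A := a.+1%:R * l1; pose B := bb.+1%:R * lk.
pose d i := c i - (i == ord0)%:R * A - (i == ord_max)%:R * B.
pose X := \sum_i d i *: Estar R e b (node i).
have betaX : forall j, beta 0 j = X 0 (node j).
  move=> j; rewrite ebeta alphaE /X !subZE (sumZE (fun i => vfrak R e b node i) c j).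
  rewrite (sumZE (fun i => Estar R e b (node i)) d (node j)).
  rewrite /d; under [RHS]eq_bigr do rewrite !mulrBl -!mulrA.
  rewrite !sumrB !sum_pick (scaleE (vfrak R e b node ord0)) (scaleE (vfrak R e b node ord_max)) !vfE.
  by under eq_bigr do rewrite vfE.
have XM : forall v, (X *m inter_mx R e b) 0 v = - \sum_i d i * (v == node i)%:R.
  move=> v; rewrite /X mulmx_suml summxE -sumrN; apply: eq_bigr => i _.
  by rewrite -scalemxAl Estar_mul // scaleE mxE [delta_mx _ _ _ _]mxE eqxx mulrN.
have XMle : forall v, v != node ord0 -> v != node ord_max -> (X *m inter_mx R e b) 0 v <= 0.
  move=> v h0 hm; rewrite XM oppr_le0; apply: sumr_ge0 => i _.
  case: (eqVneq v (node i)) => [vi|_]; last by rewrite mulr0.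
  rewrite mulr1 /d.
  have i0 : (i == ord0) = false by apply/negP => /eqP i0; move: h0; rewrite vi i0 eqxx.
  have im : (i == ord_max) = false by apply/negP => /eqP im; move: hm; rewrite vi im eqxx.
  by rewrite i0 im !mul0r !subr0.
have IV := ivt_conn esym ninj nodeP orbP.
have interval : forall i j l : 'I_k.+1, (i < j)%N -> (j < l)%N ->
    0 <= beta 0 i -> 0 <= beta 0 l -> 0 <= beta 0 j.
  move=> i j l ij jl bi bl; rewrite leNgt; apply/negP => bj.
  pose Q := fun v => X 0 v < 0.
  pose r := fun x y => [&& e x y, Q x & Q y].
  pose C := [set v | connect r (node j) v].
  have Qj : Q (node j) by rewrite /Q -betaX.
  have nQi : ~~ Q (node i) by rewrite /Q -betaX -leNgt.
  have nQl : ~~ Q (node l) by rewrite /Q -betaX -leNgt.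
  have QC : forall v, v \in C -> Q v.
    move=> v; rewrite inE => hc; apply: (connQ _ hc) => //.
    by move=> x y /and3P[].
  have H : C = set0.
    apply: (negset nd QC).
    - move=> v vC; apply: XMle.
      + apply/negP => /eqP v0; move: vC; rewrite inE v0 => hc.
        by have := IV Q j ord0 i hc Qj nQi; rewrite ij ltn0.
      + apply/negP => /eqP vm; move: (vC); rewrite inE vm => hc.
        case: (eqVneq l ord_max) => [lm|lm].
          by move: (QC _ vC); rewrite vm -lm (negbTE nQl).
        have := IV Q j ord_max l hc Qj nQl.
        rewrite ltnNge (ltnW jl) /=.
        move: lm; rewrite -val_eqE /= => lm.
        by rewrite ltn_neqAle lm -ltnS ltn_ord.
    - move=> v w wC vnC evw; rewrite leNgt; apply/negP => Xv.
      move/negP: vnC; apply; rewrite inE.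
      apply: (connect_trans (y := w)); first by rewrite inE in wC.
      apply: connect1; rewrite /r esym evw (QC _ wC) /=; exact: Xv.
  have : node j \in C by rewrite inE connect0.
  by rewrite H inE.
pose f := fun x : nat => 0 <= scoord beta x.
have fE : forall x : 'I_k.+1, f x = (0 <= beta 0 x) by move=> x; rewrite /f /scoord inord_val.
rewrite /smult -fE.
rewrite (eq_bigr (fun i : 'I_k => if (i.+1 <= n0)%N then (f i && ~~ f i.+1 : nat)
     else (f i.+1 && ~~ f i : nat))); last by move=> i _; rewrite /f !ltNge.
apply: smult_comb.
- by rewrite -ltnS ltn_ord.
- move: nnegb; rewrite /negv negb_forall => /existsP [i hi].
  by exists i; rewrite -ltnS ltn_ord fE leNgt hi.
- move=> i j l ij jl lk2 fi fl.
  have ik : (i < k.+1)%N by lia.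
  have jk : (j < k.+1)%N by lia.
  have lk1 : (l < k.+1)%N by lia.
  apply: (interval (inord i) (inord j) (inord l)); rewrite ?inordK //.
Qed.
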